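(* Let $N\geq 3$, $p>1$, $m\in\mathbb N$ and $\alpha_p:=\max\left\{0,\frac{p(N-2)-(N+2)}{2}\right\}$. For $\alpha>\alpha_p$ let $\widehat\Lambda_i(\alpha):=\widehat\Lambda_{i,\alpha}$, $i=1,\dots,m$, be the negative radial eigenvalues (in increasing order) of $$-\Delta\varphi-p|x|^\alpha|u_\alpha|^{p-1}\varphi=\widehat\Lambda\frac{\varphi}{|x|^2},\qquad\varphi\in H^1_0(B^N),$$ where $u_\alpha$ is the unique radial solution of $-\Delta u=|x|^\alpha|u|^{p-1}u$ in $B^N$, $u=0$ on $\partial B^N$, with exactly $m$ nodal sets and $u_\alpha(0)>0$; these are $C^1$ functions of $\alpha$ on $(\alpha_p,\infty)$. Let $\lambda_1<\cdots<\lambda_m<0$ and $\mu_i$ be as in the context. Then, as $\alpha\to\infty$, $$\widehat\Lambda_i(\alpha)=\frac{\lambda_i}{4}\alpha^2+c_i\alpha+o(\alpha)\quad\text{and}\quad\widehat\Lambda_i'(\alpha)=\frac{\lambda_i}{2}\alpha+c_i+o(1),$$ where $c_i=\frac{(N-2)\mu_i'(2)}{2}+\lambda_i$, $i=1,\dots,m$.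
   Context: $B^N\subset\mathbb R^N$ is the open unit ball centered at the origin; nodal sets are connected components of the set where a function does not vanish. For $M\geq2$, $H^1_{0,M}$ is the Hilbert space of measurable $w:[0,1]\to\mathbb R$ with first order weak derivative, $w(1)=0$ and $\int_0^1|w'|^2t^{M-1}dt+\int_0^1w^2t^{M-3}dt<\infty$. For $M\geq2$ with $p(M-2)<M+2$, let $v_M$ be the unique solution with $m$ nodal sets of $-v''-\frac{M-1}{t}v'=|v|^{p-1}v$ in $(0,1)$, $v(0)>0$, $v'(0)=v(1)=0$, and let $\mu_1(M)<\cdots<\mu_m(M)<0$ be the $m$ negative eigenvalues of $-\psi''-\frac{M-1}{t}\psi'-p|v_M|^{p-1}\psi=\mu\frac{\psi}{t^2}$ in $(0,1)$, $\psi\in H^1_{0,M}$. One has $\mu_i(M_\alpha)=\left(\frac{2}{\alpha+2}\right)^2\widehat\Lambda_i(\alpha)$ with $M_\alpha=\frac{2(\alpha+N)}{\alpha+2}$, the maps $M\mapsto\mu_i(M)$ are $C^1$ (including at $M=2$, with $\mu_i'(2)$ the derivative at $2$), and $\lambda_i:=\mu_i(2)$, which are the negative radial eigenvalues of $-\Delta\psi-p|w|^{p-1}\psi=\lambda\psi/|y|^2$ in $B^2\setminus\{0\}$, $\psi=0$ on $\partial B^2$, where $w=v_2$ is the radial solution of the two-dimensional Lane–Emden problem $-\Delta w=|w|^{p-1}w$ in the unit disk $B^2$, $w=0$ on $\partial B^2$, with $m$ nodal sets and $w(0)>0$. *)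

(* Defs.v *)
From HB Require Import structures.
From mathcomp Require Import all_boot all_order all_algebra.
From mathcomp Require Import all_classical all_reals all_analysis.
Set Implicit Arguments. Unset Strict Implicit. Unset Printing Implicit Defensive.
Import Order.TTheory GRing.Theory Num.Theory.
Import numFieldNormedType.Exports.
Local Open Scope classical_set_scope.
Local Open Scope ring_scope.

Section Defs.
Variable R : realType.

(* Classical members of H^1_{0,M}: psi is C^1-differentiable on (0,1)
   (so its weak derivative is derive1 psi), continuous on (0,1] with psi(1)=0,
   and int_0^1 |psi'|^2 t^(M-1) dt < oo, int_0^1 psi^2 t^(M-3) dt < oo. *)
Definition H10M_diff (M : R) (psi : R -> R) : Prop :=
  [/\ (forall t : R, 0 < t < 1 -> derivable psi t 1),
      {within `]0, 1], continuous psi},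
      psi 1 = 0,
      (@lebesgue_measure R).-integrable `]0, 1[
          (fun t => ((derive1 psi t) ^+ 2 * t `^ (M - 1))%:E)
    & (@lebesgue_measure R).-integrable `]0, 1[
          (fun t => ((psi t) ^+ 2 * t `^ (M - 3))%:E)].

Definition sing_eigenvalue (M : R) (a : R -> R) (lam : R) : Prop :=
  exists psi : R -> R,
    [/\ H10M_diff M psi,
        (exists t : R, 0 < t < 1 /\ psi t != 0)
      & forall t : R, 0 < t < 1 ->
          derivable (derive1 psi) t 1 /\
          - derive1 (derive1 psi) t - (M - 1) / t * derive1 psi t - a t * psi t
            = lam * psi t / t ^+ 2].

Definition neg_eigenvalues (M : R) (a : R -> R) (m : nat) (ev : nat -> R) : Prop :=
  [/\ (forall i : nat, (1 <= i < m)%N -> ev i < ev i.+1),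
      ev m < 0,
      (forall i : nat, (1 <= i <= m)%N -> sing_eigenvalue M a (ev i))
    & (forall lam : R, lam < 0 -> sing_eigenvalue M a lam ->
         exists2 i : nat, (1 <= i <= m)%N & lam = ev i)].

Definition has_m_nodal_sets (m : nat) (w : R -> R) : Prop :=
  exists r : nat -> R,
    [/\ r 0%N = 0, r m = 1,
        (forall i : nat, (i < m)%N -> r i < r i.+1),
        (forall i : nat, (1 <= i <= m)%N -> w (r i) = 0)
      & (forall i : nat, (i < m)%N -> forall t, r i < t < r i.+1 -> w t != 0)].

Definition radial_solution (M : R) (f : R -> R -> R) (m : nat) (w : R -> R) : Prop :=
  [/\ {within `[0, 1], continuous w},
      (fun h => (w h - w 0) / h) @ 0^'+ --> 0,
      (forall t : R, 0 < t < 1 ->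
         [/\ derivable w t 1, derivable (derive1 w) t 1 &
             - derive1 (derive1 w) t - (M - 1) / t * derive1 w t = f t (w t)]),
      w 1 = 0 /\ 0 < w 0
    & has_m_nodal_sets m w].

Definition alpha_p (N : nat) (p : R) : R :=
  Num.max 0 ((p * (N%:R - 2) - (N%:R + 2)) / 2).

Definition M_alpha (N : nat) (alpha : R) : R :=
  2 * (alpha + N%:R) / (alpha + 2).

End Defs.

(* Main.v *)
Require Import Defs.
From HB Require Import structures.
From mathcomp Require Import all_boot all_order all_algebra.
From mathcomp Require Import all_classical all_reals all_analysis.
From mathcomp Require Import ring lra.
Import Order.TTheory GRing.Theory Num.Theory.
Import numFieldNormedType.Exports.
Local Open Scope classical_set_scope.
Local Open Scope ring_scope.

Lemma phi_derive (R : realType) (K a : R) : 0 < a + 2 ->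
  is_derive a 1 (fun x : R => 2 + 2 * K / (x + 2)) (- (2 * K) / (a + 2) ^+ 2).
Proof.
move=> a2.
have h1 : is_derive a (1:R) (fun x : R => x + 2) 1.
  have := is_deriveD (is_derive_id a (1:R)) (is_derive_cst (2:R) a 1).
  by rewrite addr0.
have h2 := @is_deriveV R (fun x => x + 2) a 1 1 (lt0r_neq0 a2) h1.
have h3 := is_deriveZ (2 * K) h2.
have h4 := is_deriveD (is_derive_cst (2:R) a 1) h3.
have -> : - (2 * K) / (a + 2) ^+ 2 = 0 + (2 * K) *: (- (a + 2) ^- 2 *: (1:R)).
  rewrite add0r /GRing.scale /= mulr1; field; exact: lt0r_neq0.
exact: h4.
Qed.
Lemma right_lim_eps (R : realType) (f : R -> R) (c l : R) :
  f x @[x --> c^'+] --> l ->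
  forall e : R, 0 < e -> exists2 d : R, 0 < d &
    forall x, c < x -> x < c + d -> `|f x - l| <= e.
Proof.
move=> /cvgrPdist_le H e e0.
have := H e e0 => -[d /= d0 Hd].
exists d => // x cx xd; rewrite distrC; apply: Hd => //=.
rewrite ltr0_norm ?subr_lt0 // opprB; lra.
Qed.

Theorem proposition6p2 (R : realType) (N m : nat) (p : R)
    (v : R -> R -> R) (mu : nat -> R -> R)
    (u : R -> R -> R) (Lam : nat -> R -> R) (dmu2 : nat -> R) :
  (3 <= N)%N -> 1 < p -> (1 <= m)%N ->
  (forall M : R, 2 <= M -> p * (M - 2) < M + 2 ->
     radial_solution M (fun _ s => `|s| `^ (p - 1) * s) m (v M)) ->
  (forall M : R, 2 <= M -> p * (M - 2) < M + 2 ->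
     neg_eigenvalues M (fun t => p * `|v M t| `^ (p - 1)) m (fun i => mu i M)) ->
  (forall alpha : R, alpha_p N p < alpha ->
     radial_solution N%:R (fun t s => t `^ alpha * (`|s| `^ (p - 1) * s)) m (u alpha)) ->
  (forall alpha : R, alpha_p N p < alpha ->
     neg_eigenvalues N%:R (fun t => p * t `^ alpha * `|u alpha t| `^ (p - 1)) m
       (fun i => Lam i alpha)) ->
  (forall (i : nat) (alpha : R), (1 <= i <= m)%N -> alpha_p N p < alpha ->
     mu i (M_alpha N alpha) = (2 / (alpha + 2)) ^+ 2 * Lam i alpha) ->
  (forall i : nat, (1 <= i <= m)%N ->
     forall alpha : R, alpha_p N p < alpha ->
       derivable (Lam i) alpha 1 /\ {for alpha, continuous (derive1 (Lam i))}) ->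
  (forall i : nat, (1 <= i <= m)%N ->
     [/\ forall M : R, 2 < M -> p * (M - 2) < M + 2 ->
           derivable (mu i) M 1 /\ {for M, continuous (derive1 (mu i))},
         (fun h => (mu i (2 + h) - mu i 2) / h) @ 0^'+ --> dmu2 i
       & derive1 (mu i) x @[x --> 2^'+] --> dmu2 i]) ->
  forall i : nat, (1 <= i <= m)%N ->
    let lam := mu i 2 in
    let c := (N%:R - 2) * dmu2 i / 2 + lam in
    (forall eps : R, 0 < eps ->
       \forall a \near +oo, `|Lam i a - (lam / 4 * a ^+ 2 + c * a)| <= eps * a) /\
    (derive1 (Lam i) a - (lam / 2 * a + c)) @[a --> +oo] --> 0.
Proof.
move=> N3 p1 m1 _ _ _ _ Hrel _ Hmud i im lam c.
have [Hmuder Hr Hd'] := Hmud i im.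
set K : R := N%:R - 2.
set d := dmu2 i.
have K0 : 0 < K.
  rewrite /K subr_gt0 (@lt_le_trans _ _ 3%:R) ?ltr_nat ?ler_nat //.
have ap0 : 0 <= alpha_p N p by rewrite /alpha_p le_max lexx.
have Lrel : forall a, alpha_p N p < a ->
    Lam i a = ((a + 2) / 2) ^+ 2 * mu i (2 + 2 * K / (a + 2)).
  move=> a ha; have a2 : a + 2 != 0 by apply: lt0r_neq0; lra.
  have := Hrel i a im ha.
  have -> : M_alpha N a = 2 + 2 * K / (a + 2) by rewrite /M_alpha /K; field.
  move=> ->; field; exact: a2.
have hsmall : forall eta : R, 0 < eta ->
    \forall a \near +oo, 0 < a /\ 2 * K / (a + 2) < eta.
  move=> eta eta0; exists (2 * K / eta); split; first exact: num_real.
  move=> a /=; rewrite ltr_pdivrMr // => Ha.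
  have a0 : 0 < a by nra.
  split => //; rewrite ltr_pdivrMr; nra.
have hgt : forall T : R, \forall a \near +oo, T < a.
  by move=> T; apply: nbhs_pinfty_gt; exact: num_real.
split.
  move=> eps e0.
  have [eta eta0 Heta] := @right_lim_eps _ _ _ _ Hr _ (divr_gt0 e0 (mulr_gt0 (ltr0n _ 2) K0)).
  set X0 := `|lam + K * d|.
  near=> a.
  have ha : alpha_p N p < a by near: a; exact: hgt.
  have [a0 hh] : 0 < a /\ 2 * K / (a + 2) < eta by near: a; exact: hsmall.
  have hT : (2 * X0 + 2 * eps) / eps < a by near: a; exact: hgt.
  have hT' : 2 * X0 + 2 * eps < a * eps by rewrite -ltr_pdivrMr.
  set H := 2 * K / (a + 2).
  have H0 : 0 < H by rewrite /H divr_gt0 //; nra.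
  have := Heta H H0; rewrite add0r => /(_ hh).
  rewrite -/lam -/d; set X := mu i (2 + H) => He.
  set E := (X - lam) / H - d.
  have -> : Lam i a - (lam / 4 * a ^+ 2 + c * a) = lam + K * d + (a + 2) * (K * E) / 2.
    rewrite Lrel // -/H -/X /E /H /c /K -/d; field.
    by apply/andP; split; apply: lt0r_neq0 => //; lra.
  have hKE : `|K * E| <= eps / 2.
    rewrite normrM gtr0_norm //.
    have -> : eps / 2 = K * (eps / (2 * K)) by field; exact: lt0r_neq0.
    by rewrite ler_wpM2l // ltW.
  move: hKE; rewrite ler_norml => /andP[k1 k2].
  have : `|lam + K * d| <= X0 by [].
  rewrite ler_norml => /andP[x1 x2].
  set KE := K * E in k1 k2 *.
  have q1 : 0 <= (a + 2) * (eps / 2 - KE) by apply: mulr_ge0; lra.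
  have q2 : 0 <= (a + 2) * (KE + eps / 2) by apply: mulr_ge0; lra.
  rewrite ler_norml; apply/andP; split; lra.
apply/cvgrPdist_le => /= eps e0.
have [eta1 eta10 Heta1] := @right_lim_eps _ _ _ _ Hr _ (divr_gt0 e0 (mulr_gt0 (ltr0n _ 2) K0)).
have [eta2 eta20 Heta2] := @right_lim_eps _ _ _ _ Hd' _ (divr_gt0 e0 K0).
have p0 : 0 < p by lra.
near=> a.
have ha : alpha_p N p < a by near: a; exact: hgt.
have [a0 hh1] : 0 < a /\ 2 * K / (a + 2) < eta1 by near: a; exact: hsmall.
have [_ hh2] : 0 < a /\ 2 * K / (a + 2) < eta2 by near: a; exact: hsmall.
have [_ hh3] : 0 < a /\ 2 * K / (a + 2) < 4 / p by near: a; apply: hsmall; exact: divr_gt0.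
have a2 : 0 < a + 2 by lra.
set H := 2 * K / (a + 2) in hh1 hh2 hh3.
have H0 : 0 < H by rewrite /H divr_gt0 //; nra.
have pH : p * (2 + H - 2) < 2 + H + 2.
  rewrite ltr_pdivlMr // in hh3; lra.
have [dmu _] := Hmuder (2 + H) ltac:(lra) pH.
set X := mu i (2 + H).
set D2 := derive1 (mu i) (2 + H).
have dphi := @phi_derive _ K a a2.
have dphiv : derivable (fun x : R => 2 + 2 * K / (x + 2)) a 1 by case: dphi.
have dcomp : is_derive a (1:R) (mu i \o (fun x : R => 2 + 2 * K / (x + 2)))
    (D2 * (- (2 * K) / (a + 2) ^+ 2)).
  apply: DeriveDef.
    apply/derivable1_diffP/differentiable_comp; first exact/derivable1_diffP.
    exact/derivable1_diffP.
  rewrite -derive1E derive1_comp //.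
  rewrite !derive1E; case: dphi => _ ->.
  by rewrite /D2 derive1E.
have h1 : is_derive a (1:R) (fun x : R => x + 2) 1.
  have := is_deriveD (is_derive_id a (1:R)) (is_derive_cst (2:R) a 1).
  by rewrite addr0.
have h2 := is_deriveM h1 (is_derive_cst (2^-1 : R) a 1).
have h3 := is_deriveX 2 h2.
have h4 := is_deriveM h3 dcomp.
have HD : derive1 (Lam i) a = (a + 2) / 2 * X - K / 2 * D2.
  rewrite derive1E (@near_eq_derive _ _ _ _
     (fun x : R => ((x + 2) / 2) ^+ 2 * mu i (2 + 2 * K / (x + 2)))); last first.
    by apply: filterS (lt_nbhsr ha) => x hx; exact: Lrel.
  case: h4 => _ -> /=.
  rewrite /GRing.scale /= -/H -/X.
  have -> : (((fun x : R => x + 2) * cst 2^-1) ^+ 2) a = ((a + 2) / 2) ^+ 2.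
    by rewrite expr2 /= expr2.
  have -> : ((fun x : R => x + 2) * cst 2^-1) a = (a + 2) / 2 by [].
  field.
  by rewrite lt0r_neq0.
rewrite sub0r normrN HD.
have Hx := Heta1 H H0; rewrite add0r in Hx; have {Hx}He := Hx hh1.
rewrite -/lam -/d -/X in He.
have HD2 : `|D2 - d| <= eps / K by apply: Heta2; lra.
set E := (X - lam) / H - d in He.
have -> : (a + 2) / 2 * X - K / 2 * D2 - (lam / 2 * a + c) = K * E - K / 2 * (D2 - d).
  rewrite /E /H /c /K -/d; field.
  by apply/andP; split; apply: lt0r_neq0 => //; lra.
have hKE : `|K * E| <= eps / 2.
  rewrite normrM gtr0_norm //.
  have -> : eps / 2 = K * (eps / (2 * K)) by field; exact: lt0r_neq0.
  by rewrite ler_wpM2l // ltW.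
have hKD : `|K / 2 * (D2 - d)| <= eps / 2.
  rewrite normrM gtr0_norm ?divr_gt0 //.
  have -> : eps / 2 = K / 2 * (eps / K) by field; exact: lt0r_neq0.
  by rewrite ler_wpM2l // ltW // divr_gt0.
apply: (le_trans (ler_normB _ _)); lra.
Unshelve. all: by end_near.
Qed.
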